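(* Let $O$ be a complete discrete valuation ring of characteristic $p$ with perfect residue field, fraction field $K$, which is an $\mathbb{F}_q$-algebra, and let $M\in\mathrm{Mod}_{O,\sigma}$. Suppose $a\in A[M]_K:=A[M]\otimes_OK$ satisfies $\delta^+a:=\Delta(a)-a\otimes1-1\otimes a\in A[M]\otimes_OA[M]$ and $[\alpha]a=\alpha a$ for all $\alpha\in\mathbb{F}_q$. Then there is $a'\in A[M]$ such that $\delta^+a=\delta^+a'$ and $a-a'\in M_K:=M\otimes_OK$.
   Context: $\sigma:O\to O$ is the $q$-th power map, $M_\sigma=M\otimes_{O,\sigma}O$. $\mathrm{Mod}_{O,\sigma}$: free $O$-modules $M$ of finite rank with $O$-linear $\Phi:M_\sigma\to M$ such that $\Phi\otimes K$ is an isomorphism. $A[M]=\mathrm{Sym}_OM/(\Phi(m\otimes1)-m^{\otimes q}:m\in M)$, a Hopf algebra with comultiplication $\Delta m=m\otimes1+1\otimes m$ and $\mathbb{F}_q$-action by algebra endomorphisms $[\alpha]m=\alpha m$ for $m\in M$; $M$ is identified with its image in $A[M]$. *)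

(* Defs.v *)
From mathcomp Require Import all_boot all_order all_algebra.
From mathcomp Require Export mpoly.
Set Implicit Arguments. Unset Strict Implicit. Unset Printing Implicit Defensive.
Import Order.TTheory GRing.Theory Num.Theory.
Local Open Scope ring_scope.

Section Valuation.
Variables (K : fieldType) (v : K -> int).

(* "x has valuation >= N" (with v 0 = +oo) *)
Definition vge (x : K) (N : int) : Prop := x = 0 \/ N <= v x.
Definition inO (x : K) : Prop := vge x 0.
Definition inm (x : K) : Prop := vge x 1.

Definition discrete_valuation : Prop :=
  [/\ forall x y, x != 0 -> y != 0 -> v (x * y) = v x + v y,
      forall x y, x != 0 -> y != 0 -> x + y != 0 -> Num.min (v x) (v y) <= v (x + y)
    & exists pi, pi != 0 /\ v pi = 1].

Definition vcomplete : Prop :=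
  forall u : nat -> K,
    (forall N : int, exists m, forall i j, (m <= i)%N -> (m <= j)%N -> vge (u i - u j) N) ->
    exists l, forall N : int, exists m, forall i, (m <= i)%N -> vge (u i - l) N.

(* the residue field O/m is perfect (of characteristic p): Frobenius onto *)
Definition perfect_residue (p : nat) : Prop :=
  forall x, inO x -> exists y, inO y /\ inm (y ^+ p - x).

Definition Opoly k (P : {mpoly K[k]}) : Prop := forall m, inO P@_m.
End Valuation.

Section Pres.
Variable (K : fieldType).

Definition in_ideal k (gs : seq {mpoly K[k]}) (P : {mpoly K[k]}) : Prop :=
  exists c : nat -> {mpoly K[k]}, P = \sum_(i < size gs) c i * gs`_i.

Definition congI k (gs : seq {mpoly K[k]}) (P Q : {mpoly K[k]}) : Prop :=
  in_ideal gs (P - Q).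

(* For M = O^n with basis e_1..e_n and Phi(e_j (x) 1) = sum_i phi i j e_i,
   the relations Phi(m (x) 1) - m^q of A[M] are generated by
   X_j^q - sum_i phi i j X_i, here in variables X_(e j). *)
Definition relsA n k (q : nat) (phi : 'M[K]_n) (e : 'I_n -> 'I_k) : seq {mpoly K[k]} :=
  [seq 'X_(e j) ^+ q - \sum_(i < n) phi i j *: 'X_(e i) | j <- enum 'I_n].

Definition relsM n q (phi : 'M[K]_n) : seq {mpoly K[n]} := relsA q phi id.
(* relations of A[M] (x) A[M] (variables X_1..X_n, Y_1..Y_n) *)
Definition relsMM n q (phi : 'M[K]_n) : seq {mpoly K[n + n]} :=
  relsA q phi (@lshift n n) ++ relsA q phi (@rshift n n).

(* delta^+ a = Delta a - a (x) 1 - 1 (x) a, on representatives *)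
Definition deltap n (a : {mpoly K[n]}) : {mpoly K[n + n]} :=
  (a \mPo [tuple 'X_(lshift n i) + 'X_(rshift n i) | i < n])
  - (a \mPo [tuple 'X_(lshift n i) | i < n])
  - (a \mPo [tuple 'X_(rshift n i) | i < n]).

(* [alpha] a, for alpha acting through the scalar c = alpha in K *)
Definition actF n (c : K) (a : {mpoly K[n]}) : {mpoly K[n]} :=
  (a \mPo [tuple c *: 'X_i | i < n]).
End Pres.

(* Main.v *)
Require Import Defs.
From HB Require Import structures.
From mathcomp Require Import all_boot all_order all_algebra all_field.
From mathcomp Require Import mpoly ssrcomplements.
From Stdlib Require Import Lia.
From mathcomp Require Import zify ring.
Set Implicit Arguments. Unset Strict Implicit. Unset Printing Implicit Defensive.
Import Order.TTheory GRing.Theory Num.Theory.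
Local Open Scope ring_scope.


Section Val.
Variables (K : fieldType) (v : K -> int).
Hypothesis dv : discrete_valuation v.

Definition OB : {pred K} := fun x => (x == 0) || (0 <= v x)%R.

Lemma OBP x : reflect (inO v x) (x \in OB).
Proof.
rewrite /inO /vge unfold_in /OB; apply: (iffP orP) => -[]; try by [left|right].
- by move/eqP; left.
- by move=> ->; left.
Qed.

Lemma v1 : v 1 = 0.
Proof. case: dv => vM _ _. have := vM 1 1 (oner_neq0 _) (oner_neq0 _).
rewrite mulr1 => h. have : v 1 + v 1 - v 1 = v 1 - v 1 by rewrite -h.
by rewrite addrK subrr. Qed.

Lemma vN1 : v (-1) = 0.
Proof. case: dv => vM _ _.
have n1 : (-1 : K) != 0 by rewrite oppr_eq0 oner_neq0.
have := vM _ _ n1 n1. rewrite mulrNN mulr1 v1 => h.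
have : v (-1) *+ 2 = 0 by rewrite mulr2n h.
by move/eqP; rewrite mulrn_eq0 /= => /eqP.
Qed.

Lemma OB_subring : subring_closed OB.
Proof.
case: dv => vM vD _.
split.
- by rewrite unfold_in /OB v1 lexx orbT.
- move=> x y; rewrite !unfold_in /OB.
  have hN : forall z : K, (z == 0) || (0 <= v z) -> (- z == 0) || (0 <= v (- z)).
    move=> z /orP[/eqP->|hz]; first by rewrite oppr0 eqxx.
    have [->|nz] := eqVneq z 0; first by rewrite oppr0 eqxx.
    rewrite -mulN1r vM ?oppr_eq0 ?oner_neq0 // vN1 add0r hz orbT //.
  move=> hx /hN hy.
  case/orP: hx => [/eqP->|hx]; first by rewrite add0r.
  case/orP: hy => [/eqP->|hy]; first by rewrite addr0 hx orbT.
  have [->|nx] := eqVneq x 0; first by rewrite add0r hy orbT.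
  have [->|ny] := eqVneq (-y) 0; first by rewrite addr0 hx orbT.
  have [->|nxy] := eqVneq (x - y) 0; first by apply/orP; left.
  apply/orP; right; apply: le_trans (vD _ _ nx ny nxy).
  by rewrite le_min hx hy.
- move=> x y; rewrite !unfold_in /OB.
  case/orP => [/eqP->|hx]; first by rewrite mul0r eqxx.
  case/orP => [/eqP->|hy]; first by rewrite mulr0 eqxx.
  have [->|nx] := eqVneq x 0; first by rewrite mul0r eqxx.
  have [->|ny] := eqVneq y 0; first by rewrite mulr0 eqxx.
  by rewrite vM // addr_ge0 ?orbT.
Qed.

End Val.


Section Ideal.
Variables (K : fieldType) (n : nat) (gs : seq {mpoly K[n]}).
Local Notation PP := {mpoly K[n]}.

Lemma id0 : in_ideal gs 0.
Proof. by exists (fun _ => 0); rewrite big1 // => i _; rewrite mul0r. Qed.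

Lemma idD p1 p2 : in_ideal gs p1 -> in_ideal gs p2 -> in_ideal gs (p1 + p2).
Proof.
move=> [c1 ->] [c2 ->]; exists (fun i => c1 i + c2 i).
by rewrite -big_split; apply: eq_bigr => i _; rewrite mulrDl.
Qed.

Lemma idM r p : in_ideal gs p -> in_ideal gs (r * p).
Proof.
move=> [c ->]; exists (fun i => r * c i).
by rewrite mulr_sumr; apply: eq_bigr => i _; rewrite mulrA.
Qed.

Lemma idZ a p : in_ideal gs p -> in_ideal gs (a *: p).
Proof. by rewrite -mul_mpolyC; apply: idM. Qed.

Lemma idN p : in_ideal gs p -> in_ideal gs (- p).
Proof. by move=> h; rewrite -mulN1r; apply: idM. Qed.

Lemma idB p1 p2 : in_ideal gs p1 -> in_ideal gs p2 -> in_ideal gs (p1 - p2).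
Proof. by move=> h1 h2; apply: idD => //; apply: idN. Qed.

Lemma id_sum (I : Type) (r : seq I) (P : pred I) (G : I -> PP) :
  (forall i, P i -> in_ideal gs (G i)) -> in_ideal gs (\sum_(i <- r | P i) G i).
Proof.
move=> h; elim/big_ind: _ => //; first exact: id0.
by move=> ? ?; apply: idD.
Qed.

Lemma id_gen i : (i < size gs)%N -> in_ideal gs gs`_i.
Proof.
move=> hi; exists (fun j => (j == i)%:R).
rewrite (bigD1 (Ordinal hi)) //= eqxx mul1r big1 ?addr0 // => j hj.
by rewrite -val_eqE /= in hj; rewrite (negbTE hj) mul0r.
Qed.

Lemma cong_refl p : congI gs p p.
Proof. by rewrite /congI subrr; apply: id0. Qed.

Lemma cong_sym p1 p2 : congI gs p1 p2 -> congI gs p2 p1.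
Proof. by rewrite /congI => h; rewrite -opprB; apply: idN. Qed.

Lemma cong_trans p1 p2 p3 : congI gs p1 p2 -> congI gs p2 p3 -> congI gs p1 p3.
Proof.
rewrite /congI => h1 h2.
by have := idD h1 h2; rewrite addrA subrK.
Qed.

Lemma congM a b c d : congI gs a b -> congI gs c d -> congI gs (a * c) (b * d).
Proof.
rewrite /congI => h1 h2.
have -> : a * c - b * d = c * (a - b) + b * (c - d) by ring.
by apply: idD; apply: idM.
Qed.

Lemma congD a b c d : congI gs a b -> congI gs c d -> congI gs (a + c) (b + d).
Proof.
rewrite /congI => h1 h2.
by have := idD h1 h2; rewrite opprD addrACA.
Qed.

Lemma cong_prod (I : Type) (r : seq I) (P : pred I) (G1 G2 : I -> PP) :
  (forall i, P i -> congI gs (G1 i) (G2 i)) ->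
  congI gs (\prod_(i <- r | P i) G1 i) (\prod_(i <- r | P i) G2 i).
Proof.
move=> h; elim/big_ind2: _ => //; first exact: cong_refl.
by move=> ? ? ? ? ; apply: congM.
Qed.

Lemma cong_exp a b e : congI gs a b -> congI gs (a ^+ e) (b ^+ e).
Proof.
move=> h; elim: e => [|e IH]; first by rewrite !expr0; apply: cong_refl.
by rewrite !exprS; apply: congM.
Qed.

End Ideal.

Lemma id_comp (K : fieldType) n (gs : seq {mpoly K[n]}) m (hs : seq {mpoly K[m]}) (lq : n.-tuple {mpoly K[m]}) p :
  in_ideal gs p -> (forall i, (i < size gs)%N -> in_ideal hs (gs`_i \mPo lq)) ->
  in_ideal hs (p \mPo lq).
Proof.
move=> [c ->] h; rewrite rmorph_sum; apply: id_sum => i _.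
by rewrite rmorphM; apply: idM; apply: h.
Qed.


Section Red.
Variables (K : fieldType) (k q : nat) (psi : 'M[K]_k).
Hypothesis q_gt1 : (1 < q)%N.

Local Notation PP := {mpoly K[k]}.

Definition Lp (j : 'I_k) : PP := \sum_(l < k) psi l j *: 'X_l.
Definition gp j : PP := 'X_j ^+ q - Lp j.
Definition mq (m : 'X_{1..k}) : 'X_{1..k} := [multinom (m i %% q)%N | i < k].
Definition dq (m : 'X_{1..k}) : 'X_{1..k} := [multinom (m i %/ q)%N | i < k].
Definition r1 m : PP := 'X_[mq m] * mmap1 Lp (dq m).
Definition lext (F : 'X_{1..k} -> PP) (p : PP) : PP :=
  \sum_(m <- msupp p) p@_m *: F m.
Definition redm (m : 'X_{1..k}) := [forall i, (m i < q)%N].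
Definition reduced (p : PP) := all redm (msupp p).

Lemma lextwE F p w : (msize p <= w)%N ->
  lext F p = \sum_(m : 'X_{1..k < w}) p@_m *: F m.
Proof.
move=> le_pw; set I : subFinType _ := 'X_{1..k < w}.
rewrite /lext (big_mksub I) ?msupp_uniq //=; first last.
  by move=> x /msize_mdeg_lt /leq_trans; apply.
by rewrite big_rmcond //= => j /memN_msupp_eq0 ->; rewrite scale0r.
Qed.

Lemma lext_is_linear F : linear (lext F).
Proof.
move=> c p1 p2; set w := (msize p1 + msize p2)%N.
have h1 : (msize p1 <= w)%N by rewrite leq_addr.
have h2 : (msize p2 <= w)%N by rewrite leq_addl.
have h3 : (msize (c *: p1 + p2) <= w)%N.
  apply: leq_trans (msizeD_le _ _) _; rewrite geq_max h2 andbT.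
  exact: leq_trans (msizeZ_le _ _) h1.
rewrite !(lextwE F h1, lextwE F h2, lextwE F h3) scaler_sumr -big_split /=.
by apply: eq_bigr => m _; rewrite mcoeffD mcoeffZ scalerDl scalerA.
Qed.

HB.instance Definition _ F := GRing.isLinear.Build K PP PP _ (lext F)
  (lext_is_linear F).

Lemma lextB F p1 p2 : lext F (p1 - p2) = lext F p1 - lext F p2.
Proof. exact: linearB. Qed.
Lemma lextD F p1 p2 : lext F (p1 + p2) = lext F p1 + lext F p2.
Proof. exact: linearD. Qed.
Lemma lextZ F c p : lext F (c *: p) = c *: lext F p.
Proof. exact: linearZ. Qed.
Lemma lext0 F : lext F 0 = 0.
Proof. exact: linear0. Qed.
Lemma lext_sum F (I : Type) (r : seq I) (P : pred I) (G : I -> PP) :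
  lext F (\sum_(i <- r | P i) G i) = \sum_(i <- r | P i) lext F (G i).
Proof. exact: linear_sum. Qed.

Lemma lextX F m : lext F 'X_[m] = F m.
Proof. by rewrite /lext msuppX big_seq1 mcoeffX eqxx scale1r. Qed.

Local Notation rho := (lext r1).
Definition rhoN d p := iter d rho p.

Lemma rhoN_is_linear d : linear (rhoN d).
Proof.
elim: d => [|d IH] c p1 p2; first by [].
have E : forall p, rhoN d.+1 p = rho (rhoN d p) by [].
by rewrite !E IH linearP.
Qed.

HB.instance Definition _ d := GRing.isLinear.Build K PP PP _ (rhoN d)
  (rhoN_is_linear d).

Lemma rhoNB d p1 p2 : rhoN d (p1 - p2) = rhoN d p1 - rhoN d p2.
Proof. exact: linearB. Qed.
Lemma rhoND d p1 p2 : rhoN d (p1 + p2) = rhoN d p1 + rhoN d p2.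
Proof. exact: linearD. Qed.
Lemma rhoNZ d c p : rhoN d (c *: p) = c *: rhoN d p.
Proof. exact: linearZ. Qed.
Lemma rhoN0 d : rhoN d 0 = 0.
Proof. exact: linear0. Qed.
Lemma rhoN_sum d (I : Type) (r : seq I) (P : pred I) (G : I -> PP) :
  rhoN d (\sum_(i <- r | P i) G i) = \sum_(i <- r | P i) rhoN d (G i).
Proof. exact: linear_sum. Qed.

Lemma rhoNS d p : rhoN d.+1 p = rhoN d (rho p).
Proof. by rewrite /rhoN iterSr. Qed.

Lemma redmP (m : 'X_{1..k}) : reflect (forall i, (m i < q)%N) (redm m).
Proof. exact: forallP. Qed.

Lemma r1_red (m : 'X_{1..k}) : redm m -> r1 m = 'X_[m].
Proof.
move/redmP=> h; rewrite /r1.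
have -> : mq m = m by apply/mnmP => i; rewrite mnmE modn_small.
have -> : dq m = 0%MM by apply/mnmP => i; rewrite mnmE mnm0E divn_small.
by rewrite mmap11 mulr1.
Qed.

Lemma rho_red p : reduced p -> rho p = p.
Proof.
move=> /allP h; rewrite [RHS]mpolyE /lext.
rewrite big_seq_cond [RHS]big_seq_cond; by apply: eq_bigr => m /andP[hm _]; rewrite r1_red // h.
Qed.

Lemma rhoN_red d p : reduced p -> rhoN d p = p.
Proof.
move=> h; elim: d => // d IH.
have E : rhoN d.+1 p = rho (rhoN d p) by [].
by rewrite E IH rho_red.
Qed.

Definition dle n (p : PP) := (msize p <= n.+1)%N.

Lemma dleW a b p : (a <= b)%N -> dle a p -> dle b p.
Proof. by rewrite /dle => h1 h2; apply: leq_trans h2 _; rewrite ltnS. Qed.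

Lemma dleM a b p r : dle a p -> dle b r -> dle (a + b) (p * r).
Proof.
rewrite /dle.
have [->|np] := eqVneq p 0; first by rewrite mul0r msize0.
have [->|nr] := eqVneq r 0; first by rewrite mulr0 msize0.
rewrite msizeM // => h1 h2.
have := msize_poly_eq0 p; have := msize_poly_eq0 r.
rewrite (negbTE np) (negbTE nr) => /eqP h3 /eqP h4.
by move: h1 h2 h3 h4; set x := msize p; set y := msize r; lia.
Qed.

Lemma dle1 : dle 0 (1 : PP).
Proof. by rewrite /dle msize1. Qed.

Lemma dleX m : dle (mdeg m) ('X_[m] : PP).
Proof. by rewrite /dle msizeX. Qed.

Lemma dleL j : dle 1 (Lp j).
Proof.
rewrite /dle /Lp; apply: leq_trans (msize_sum _ _ _) _.
apply/bigmax_leqP => l _; apply: leq_trans (msizeZ_le _ _) _.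
by rewrite msizeX mdeg1.
Qed.

Lemma dle_mmap1 w : dle (mdeg w) (mmap1 Lp w).
Proof.
rewrite /mmap1 mdegE.
elim/big_ind2: _ => //; first exact: dle1.
  by move=> x1 a1 x2 a2 h1 h2; apply: dleM.
move=> i _; elim: (w i) => [|e IH]; first by rewrite expr0; exact: dle1.
by rewrite exprS -[e.+1]add1n; apply: dleM => //; apply: dleL.
Qed.

Lemma mdeg_split m : mdeg m = (mdeg (mq m) + q * mdeg (dq m))%N.
Proof.
have E : m = (mq m + dq m *+ q)%MM.
  by apply/mnmP => i; rewrite mnmDE mulmnE !mnmE addnC -divn_eq.
by rewrite {1}E mdegD mdegMn mulnC.
Qed.


Lemma mq_addq m j : mq (m + U_(j) *+ q) = mq m.
Proof.
apply/mnmP => i; rewrite !(mnmE, mnmDE, mnmBE, mulmnE, mnm1E).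
by rewrite addnC modnMDl.
Qed.

Lemma dq_addq m j : dq (m + U_(j) *+ q) = (dq m + U_(j))%MM.
Proof.
apply/mnmP => i; rewrite !(mnmE, mnmDE, mnmBE, mulmnE, mnm1E).
by rewrite addnC divnMDl ?(ltnW q_gt1) // addnC.
Qed.

Section HL.
Variables (m : 'X_{1..k}) (l : 'I_k).

Lemma mq_add1_top : mq m l = q.-1 -> mq (m + U_(l)) = (mq m - U_(l) *+ q.-1)%MM.
Proof.
move=> hl; apply/mnmP => i; rewrite !(mnmE, mnmDE, mnmBE, mulmnE, mnm1E).
have [<-|nli] := eqVneq l i; last by rewrite addn0 mul0n subn0.
move: hl; rewrite mnmE ?eqxx => hl.
rewrite mul1n -modnDml hl subnn addn1 prednK ?modnn //; lia.
Qed.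

Lemma dq_add1_top : mq m l = q.-1 -> dq (m + U_(l)) = (dq m + U_(l))%MM.
Proof.
move=> hl; apply/mnmP => i; rewrite !(mnmE, mnmDE, mnmBE, mulmnE, mnm1E).
have [<-|nli] := eqVneq l i; last by rewrite !addn0.
move: hl; rewrite mnmE ?eqxx => hl.
have -> : (m l + 1 = (m l %/ q + 1) * q)%N.
  rewrite {1}(divn_eq (m l) q) hl mulnDl mul1n -addnA; congr (_ + _)%N.
  by rewrite addn1 prednK //; lia.
by rewrite mulnK //; lia.
Qed.

Lemma mq_add1_low : mq m l != q.-1 -> mq (m + U_(l)) = (mq m + U_(l))%MM.
Proof.
move=> hl; apply/mnmP => i; rewrite !(mnmE, mnmDE, mnmBE, mulmnE, mnm1E).
have [<-|nli] := eqVneq l i; last by rewrite !addn0.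
move: hl; rewrite mnmE ?eqxx => hl.
rewrite -modnDml modn_small //.
have h := ltn_mod (m l) q; rewrite (ltnW q_gt1) in h.
move: hl h; set x := (m l %% q)%N => /eqP hl h; lia.
Qed.

Lemma dq_add1_low : mq m l != q.-1 -> dq (m + U_(l)) = dq m.
Proof.
move=> hl; apply/mnmP => i; rewrite !(mnmE, mnmDE, mnmBE, mulmnE, mnm1E).
have [<-|nli] := eqVneq l i; last by rewrite !addn0.
move: hl; rewrite mnmE => hl.
rewrite {1}(divn_eq (m l) q) -addnA divnMDl ?(ltnW q_gt1) //.
have h := ltn_mod (m l) q; rewrite (ltnW q_gt1) in h.
rewrite [X in (_ + X)%N]divn_small ?addn0 //=.
move: hl h; set x := (m l %% q)%N => /eqP hl h; lia.
Qed.

Lemma mq_split_top : mq m l = q.-1 ->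
  mq m = ((mq m - U_(l) *+ q.-1) + U_(l) *+ q.-1)%MM.
Proof.
move=> hl; apply/mnmP => i; rewrite !(mnmE, mnmDE, mnmBE, mulmnE, mnm1E).
have [<-|nli] := eqVneq l i; last by rewrite mul0n subn0 addn0.
move: hl; rewrite mnmE => hl; by rewrite mul1n hl subnn.
Qed.

End HL.

Lemma rho_Xg m j : rho ('X_[m] * gp j) = \sum_(l < k)
  (if mq m l == q.-1 then
     psi l j *: ('X_[mq m - U_(l) *+ q.-1] * mmap1 Lp (dq m) * gp l)
   else 0).
Proof.
have eXg : 'X_[m] * gp j
    = 'X_[m + U_(j) *+ q] - \sum_(l < k) psi l j *: 'X_[m + U_(l)].
  rewrite /gp mulrBr /Lp mulr_sumr mpolyXD mpolyXn; congr (_ - _).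
  by apply: eq_bigr => l _; rewrite -scalerAr -mpolyXD.
have hcomm : forall (i : 'I_k) (x : PP), GRing.comm x (Lp i) by move=> i x; exact: mulrC.
rewrite eXg lextB lext_sum lextX.
under eq_bigr => l _ do rewrite lextZ lextX.
have A : r1 (m + U_(j) *+ q)
    = \sum_(l < k) psi l j *: ('X_[mq m] * mmap1 Lp (dq m) * 'X_l).
  rewrite /r1 mq_addq dq_addq commr_mmap1_M // mmap1U mulrA /Lp mulr_sumr.
  by apply: eq_bigr => l _; rewrite scalerAr.
rewrite A -sumrB; apply: eq_bigr => l _; rewrite -scalerBr.
case: ifP => hl.
- have hl' : mq m l = q.-1 by apply/eqP.
  have H2 : r1 (m + U_(l))
      = 'X_[mq m - U_(l) *+ q.-1] * mmap1 Lp (dq m) * Lp l.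
    by rewrite /r1 mq_add1_top // dq_add1_top // commr_mmap1_M // mmap1U mulrA.
  have H1 : ('X_[mq m] : PP) * 'X_l = 'X_[mq m - U_(l) *+ q.-1] * 'X_l ^+ q.
    rewrite {1}(mq_split_top hl') mpolyXD -mpolyXn -mulrA -exprSr prednK //.
    exact: ltnW.
  by rewrite H2 mulrAC H1 mulrAC /gp mulrBr.
- have hl' : mq m l != q.-1 by rewrite hl.
  have H2 : r1 (m + U_(l)) = 'X_[mq m] * 'X_l * mmap1 Lp (dq m).
    by rewrite /r1 mq_add1_low // dq_add1_low // mpolyXD.
  by rewrite H2 mulrAC subrr scaler0.
Qed.


Lemma mdeg_top m l : mq m l = q.-1 ->
  mdeg (mq m) = (mdeg (mq m - U_(l) *+ q.-1) + q.-1)%N.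
Proof. by move=> hl; rewrite {1}(mq_split_top hl) mdegD mdegMn mdeg1 mul1n. Qed.

Lemma kill d c j : (msize c <= d)%N -> rhoN d (c * gp j) = 0.
Proof.
elim: d c j => [|d IH] c j hc.
  have /eqP -> : c == 0 by rewrite -msize_poly_eq0 -leqn0.
  by rewrite mul0r rhoN0.
rewrite [c]mpolyE mulr_suml rhoN_sum big1_seq // => m /andP[_ hm].
rewrite -scalerAl rhoNZ rhoNS rho_Xg rhoN_sum big1 ?scaler0 // => l _.
case: ifP => hl; last exact: rhoN0.
rewrite rhoNZ IH ?scaler0 //.
have hm' : (mdeg m < d.+1)%N := leq_trans (msize_mdeg_lt hm) hc.
have := dleM (dleX (mq m - U_(l) *+ q.-1)) (dle_mmap1 (dq m)); rewrite /dle.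
move=> h; apply: leq_trans h _.
move: hm'; rewrite mdeg_split (mdeg_top (eqP hl)).
set E := mdeg _; set W := mdeg _ => h.
have : (W <= q * W)%N by rewrite leq_pmull //; lia.
move: h; clearbody E W; clear -q_gt1; nia.
Qed.

Lemma reduced0 : reduced 0.
Proof. by rewrite /reduced msupp0. Qed.

Lemma reducedD p1 p2 : reduced p1 -> reduced p2 -> reduced (p1 + p2).
Proof.
move=> /allP h1 /allP h2; apply/allP => m /msuppD_le.
by rewrite mem_cat => /orP[/h1|/h2].
Qed.

Lemma reducedZ c p : reduced p -> reduced (c *: p).
Proof. by move/allP=> h; apply/allP => m /msuppZ_le /h. Qed.

Lemma reduced_sum (I : Type) (r : seq I) (P : pred I) (G : I -> PP) :
  (forall i, P i -> reduced (G i)) -> reduced (\sum_(i <- r | P i) G i).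
Proof.
move=> h; elim/big_ind: _ => //; first exact: reduced0.
by move=> ? ?; apply: reducedD.
Qed.

Lemma reducedX m : redm m -> reduced 'X_[m].
Proof. by rewrite /reduced msuppX /= andbT. Qed.

Lemma rhoN_reduced d p : (msize p <= d)%N -> reduced (rhoN d p).
Proof.
elim: d p => [|d IH] p hp.
  have /eqP -> : p == 0 by rewrite -msize_poly_eq0 -leqn0.
  by rewrite rhoN0 reduced0.
rewrite [p]mpolyE rhoN_sum big_seq; apply: reduced_sum => m hm.
rewrite rhoNZ; apply: reducedZ.
case hr: (redm m); first by rewrite rhoN_red ?reducedX.
rewrite rhoNS lextX; apply: IH.
have hm' : (mdeg m < d.+1)%N := leq_trans (msize_mdeg_lt hm) hp.
have := dleM (dleX (mq m)) (dle_mmap1 (dq m)); rewrite /dle.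
move=> h; apply: leq_trans h _.
have /forallPn [i hi] := negbT hr.
have hW : (0 < mdeg (dq m))%N.
  rewrite mdegE (bigD1 i) //= mnmE; apply: leq_trans (leq_addr _ _).
  by rewrite divn_gt0 ?(ltnW q_gt1) // leqNgt.
move: hm' hW; rewrite mdeg_split.
set E := mdeg (mq m); set W := mdeg (dq m).
clearbody E W; clear -q_gt1; nia.
Qed.


Lemma X_split (m : 'X_{1..k}) :
  'X_[m] = 'X_[mq m] * \prod_(i < k) ('X_i ^+ q) ^+ (dq m i) :> PP.
Proof.
have E : m = (mq m + dq m *+ q)%MM.
  by apply/mnmP => i; rewrite mnmDE mulmnE !mnmE addnC -divn_eq.
rewrite {1}E mpolyXD -mpolyXn; congr (_ * _).
rewrite mpolyXE_id -prodrXl; apply: eq_bigr => i _; by rewrite exprAC.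
Qed.

Lemma rho_cong gs : (forall j, in_ideal gs (gp j)) -> forall p, congI gs p (rho p).
Proof.
move=> hg p; rewrite /congI {1}[p]mpolyE /lext -sumrB; apply: id_sum => m _.
rewrite -scalerBr; apply: idZ.
rewrite X_split /r1; apply: congM; first exact: cong_refl.
rewrite /mmap1; apply: cong_prod => i _; apply: cong_exp.
exact: hg.
Qed.

Lemma rhoN_cong gs : (forall j, in_ideal gs (gp j)) -> forall d p, congI gs p (rhoN d p).
Proof.
move=> hg; elim=> [|d IH] p; first exact: cong_refl.
have E : rhoN d.+1 p = rho (rhoN d p) by [].
by rewrite E; apply: cong_trans (IH p) (rho_cong hg _).
Qed.

Lemma kill_ideal gs p : in_ideal gs p ->
  (forall i, (i < size gs)%N -> exists j, gs`_i = gp j) -> exists d, rhoN d p = 0.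
Proof.
move=> [c ->] h; exists (\sum_(i < size gs) msize (c i))%N.
rewrite rhoN_sum big1 // => i _; have [j ->] := h i (ltn_ord i).
by apply: kill; rewrite (bigD1 i) //= leq_addr.
Qed.

Lemma reduced_ideal0 gs p : reduced p -> in_ideal gs p ->
  (forall i, (i < size gs)%N -> exists j, gs`_i = gp j) -> p = 0.
Proof.
move=> hr hi hg; have [d hd] := kill_ideal hi hg.
by rewrite -(rhoN_red d hr).
Qed.

Section Over.
Variable S : subringClosed K.
Hypothesis psiS : forall i j, psi i j \in S.

Lemma r1_over m : r1 m \in mpolyOver k S.
Proof.
rewrite /r1 rpredM ?mpolyOverX // /mmap1 rpred_prod // => i _.
rewrite rpredX // /Lp rpred_sum // => l _.
by rewrite mpolyOverZ ?mpolyOverX.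
Qed.

Lemma rhoN_over d p : p \in mpolyOver k S -> rhoN d p \in mpolyOver k S.
Proof.
elim: d p => [|d IH] p hp //.
have E : rhoN d.+1 p = rho (rhoN d p) by [].
rewrite E /lext rpred_sum // => m _.
by rewrite mpolyOverZ ?r1_over //; apply/mpolyOverP/IH.
Qed.

End Over.

End Red.


Section Gen.
Variable K : fieldType.

Lemma compXU n k (G : 'I_n -> {mpoly K[k]}) i :
  'X_i \mPo [tuple G j | j < n] = G i.
Proof. by rewrite comp_mpolyXU -tnth_nth tnth_mktuple. Qed.

Lemma comp_sum n k (t : n.-tuple {mpoly K[k]}) (I : Type) (r : seq I) (Pr : pred I)
  (G : I -> {mpoly K[n]}) :
  (\sum_(i <- r | Pr i) G i) \mPo t = \sum_(i <- r | Pr i) (G i \mPo t).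
Proof. exact: raddf_sum. Qed.

Lemma compXn n k (t : n.-tuple {mpoly K[k]}) (P : {mpoly K[n]}) e :
  (P ^+ e) \mPo t = (P \mPo t) ^+ e.
Proof. exact: rmorphXn. Qed.

Lemma compM n k (t : n.-tuple {mpoly K[k]}) (P Q : {mpoly K[n]}) :
  (P * Q) \mPo t = (P \mPo t) * (Q \mPo t).
Proof. exact: rmorphM. Qed.

Lemma compmA n k l (P : {mpoly K[n]}) (t1 : n.-tuple {mpoly K[k]})
    (t2 : k.-tuple {mpoly K[l]}) :
  (P \mPo t1) \mPo t2 = P \mPo [tuple (tnth t1 i \mPo t2) | i < n].
Proof.
rewrite [P \mPo t1]comp_mpolyEX [RHS]comp_mpolyEX raddf_sum.
apply: eq_bigr => m _; rewrite /= comp_mpolyZ; congr (_ *: _).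
rewrite !comp_mpolyX rmorph_prod; apply: eq_bigr => i _.
by rewrite rmorphXn tnth_mktuple.
Qed.

Lemma coef_sumX n (s : seq 'X_{1..n}) (a : 'X_{1..n} -> K) e : uniq s ->
  (\sum_(m <- s) a m *: ('X_[m] : {mpoly K[n]}))@_e = if e \in s then a e else 0.
Proof.
move=> us; rewrite raddf_sum /=.
under eq_bigr => m _ do rewrite mcoeffZ mcoeffX.
case: ifP => he.
  rewrite (bigD1_seq e) //= eqxx mulr1 big1 ?addr0 // => m hm.
  by rewrite (negbTE hm) mulr0.
rewrite big1_seq // => m /andP[_ hm]; case: eqVneq => [E|]; last by rewrite mulr0.
by rewrite -E hm in he.
Qed.

Lemma coefE n (b : {mpoly K[n]}) e :
  b@_e = if e \in msupp b then b@_e else 0.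
Proof. by case: ifP => // /negbT /memN_msupp_eq0. Qed.

Lemma comp_over n k (S : subringClosed K) (P : {mpoly K[n]}) (t : n.-tuple {mpoly K[k]}) :
  P \in mpolyOver n S -> (forall i, tnth t i \in mpolyOver k S) ->
  P \mPo t \in mpolyOver k S.
Proof.
move=> hP ht; rewrite comp_mpolyE rpred_sum // => m _.
rewrite mpolyOverZ //; first by apply/mpolyOverP.
by rewrite rpred_prod // => i _; rewrite rpredX.
Qed.

Definition selT n (S : pred 'I_n) : n.-tuple {mpoly K[n]} :=
  [tuple (if S i then 'X_i else 0) | i < n].

Definition allin n (S : pred 'I_n) (m : 'X_{1..n}) := [forall i, ~~ S i ==> (m i == 0%N)].

Lemma selX n (S : pred 'I_n) m :
  'X_[m] \mPo selT S = if allin S m then 'X_[m] else 0.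
Proof.
rewrite comp_mpolyX; case: ifP => h.
  rewrite [RHS]mpolyXE_id; apply: eq_bigr => i _; rewrite tnth_mktuple.
  case: ifP => // hS; move/forallP: h => /(_ i); rewrite hS /= => /eqP ->.
  by rewrite !expr0.
have /forallPn [i] := negbT h; rewrite negb_imply => /andP[hS hm].
rewrite (bigD1 i) //= tnth_mktuple (negbTE hS) expr0n (negbTE hm) mul0r.
by [].
Qed.

Lemma coef_sel n (S : pred 'I_n) (b : {mpoly K[n]}) e :
  (b \mPo selT S)@_e = if allin S e then b@_e else 0.
Proof.
rewrite comp_mpolyEX.
under eq_bigr => m _ do rewrite selX.
have -> : \sum_(m <- msupp b) b@_m *: (if allin S m then 'X_[m] else 0 : {mpoly K[n]})
   = \sum_(m <- msupp b) (if allin S m then b@_m else 0) *: 'X_[m].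
  by apply: eq_bigr => m _; case: ifP; rewrite ?scaler0 ?scale0r.
rewrite coef_sumX ?msupp_uniq //.
case: ifP => // /negbT he; case: ifP => // _; by rewrite memN_msupp_eq0.
Qed.

Definition bnd n (B : 'X_{1..n}) (P : {mpoly K[n]}) :=
  all (fun u => (u <= B)%MM) (msupp P).

Lemma bndD n B (P Q : {mpoly K[n]}) : bnd B P -> bnd B Q -> bnd B (P + Q).
Proof.
move=> /allP h1 /allP h2; apply/allP => m /msuppD_le.
by rewrite mem_cat => /orP[/h1|/h2].
Qed.

Lemma bndZ n B c (P : {mpoly K[n]}) : bnd B P -> bnd B (c *: P).
Proof. by move/allP=> h; apply/allP => m /msuppZ_le /h. Qed.

Lemma bndW n (B B' : 'X_{1..n}) P : (B <= B')%MM -> bnd B P -> bnd B' P.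
Proof. by move=> hB /allP h; apply/allP => m /h /lepm_trans; apply. Qed.

Lemma lem_addP n (m1 m2 B1 B2 : 'X_{1..n}) :
  (m1 <= B1)%MM -> (m2 <= B2)%MM -> (m1 + m2 <= B1 + B2)%MM.
Proof.
move=> /mnm_lepP h1 /mnm_lepP h2; apply/mnm_lepP => i.
by rewrite !mnmDE leq_add.
Qed.

Lemma bndM n B1 B2 (P Q : {mpoly K[n]}) :
  bnd B1 P -> bnd B2 Q -> bnd (B1 + B2)%MM (P * Q).
Proof.
move=> /allP h1 /allP h2; apply/allP => u /msuppM_le /allpairsP [[m1 m2] /= [hm1 hm2 ->]].
by apply: lem_addP; [apply: h1 | apply: h2].
Qed.

Lemma bnd1 n : bnd 0%MM (1 : {mpoly K[n]}).
Proof. by rewrite /bnd msupp1 /= lepm_refl. Qed.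

Lemma bndX n (i : 'I_n) : bnd U_(i) ('X_i : {mpoly K[n]}).
Proof. by rewrite /bnd msuppX /= lepm_refl. Qed.

Lemma bndXn n B (P : {mpoly K[n]}) e : bnd B P -> bnd (B *+ e)%MM (P ^+ e).
Proof.
move=> h; elim: e => [|e IH]; first by rewrite expr0 mulm0n; apply: bnd1.
by rewrite exprS mulmS; apply: bndM.
Qed.

Lemma bnd_prod n k (B : 'I_k -> 'X_{1..n}) (P : 'I_k -> {mpoly K[n]}) :
  (forall i, bnd (B i) (P i)) ->
  bnd (\big[+%MM/0%MM]_(i < k) B i) (\prod_(i < k) P i).
Proof.
move=> h; elim/big_ind2: _ => //; first exact: bnd1.
by move=> ? ? ? ?; apply: bndM.
Qed.

Lemma bnd_sum n B (I : Type) (r : seq I) (Pr : pred I) (G : I -> {mpoly K[n]}) :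
  (forall i, Pr i -> bnd B (G i)) -> bnd B (\sum_(i <- r | Pr i) G i).
Proof.
move=> h; elim/big_ind: _ => //; first by rewrite /bnd msupp0.
by move=> ? ?; apply: bndD.
Qed.

Lemma exists_alpha (F : finFieldType) m : m != 1%N -> (m < #|F|)%N ->
  exists a : F, a ^+ m != a.
Proof.
move=> m1 mq.
case: m m1 mq => [|[|m]] // _ mq.
  by exists 0; rewrite expr0 oner_neq0.
apply/existsP; apply: contraTT mq => /existsPn h.
rewrite -leqNgt.
have := @max_poly_roots _ ('X^(m.+2) - 'X) (enum F).
have hs : size ('X^(m.+2) - 'X : {poly F}) = m.+3.
  by rewrite size_polyDl ?size_polyXn // size_polyN size_polyX.
have nz : ('X^(m.+2) - 'X : {poly F}) != 0 by rewrite -size_poly_eq0 hs.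
rewrite hs cardE; apply => //; last exact: enum_uniq.
apply/allP => x _; rewrite rootE !hornerE.
by have := h x; rewrite negbK => /eqP ->; rewrite subrr.
Qed.

End Gen.


Section Main.
Variables (K : fieldType) (p : nat) (F : finFieldType) (f : {rmorphism F -> K})
  (n : nat) (phi : 'M[K]_n).
Hypothesis pK : p \in [pchar K].
Local Notation q := #|F|.
Let q_gt1 : (1 < q)%N := finNzRing_gt1 F.
Local Notation PX := {mpoly K[n]}.
Local Notation PXY := {mpoly K[n + n]}.
Definition psi2 : 'M[K]_(n + n) := block_mx phi 0 0 phi.

Lemma size_relsM : size (relsM q phi) = n.
Proof. by rewrite size_map -?enumT size_enum_ord. Qed.

Lemma relsM_nth (j : 'I_n) : (relsM q phi)`_j = gp q phi j.
Proof.
rewrite /relsM /relsA -?enumT (nth_map j) ?size_enum_ord //.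
have -> : nth j (enum 'I_n) j = j by apply: ord_inj; rewrite nth_enum_ord.
by [].
Qed.

Lemma relsM_gp i : (i < size (relsM q phi))%N ->
  exists j, (relsM q phi)`_i = gp q phi j.
Proof.
move=> hi; rewrite size_relsM in hi; exists (Ordinal hi).
exact: (relsM_nth (Ordinal hi)).
Qed.

Lemma gpM_ideal j : in_ideal (relsM q phi) (gp q phi j).
Proof. by rewrite -relsM_nth; apply: id_gen; rewrite size_relsM. Qed.

Lemma Lp_psi2_l j : Lp psi2 (lshift n j) = \sum_(i < n) phi i j *: ('X_(lshift n i) : PXY).
Proof.
rewrite /Lp big_split_ord /= [X in _ + X]big1 ?addr0 => [|i _].
  by apply: eq_bigr => i _; rewrite /psi2 block_mxEul.
by rewrite /psi2 block_mxEdl mxE scale0r.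
Qed.

Lemma Lp_psi2_r j : Lp psi2 (rshift n j) = \sum_(i < n) phi i j *: ('X_(rshift n i) : PXY).
Proof.
rewrite /Lp big_split_ord /= big1 ?add0r => [|i _].
  by apply: eq_bigr => i _; rewrite /psi2 block_mxEdr.
by rewrite /psi2 block_mxEur mxE scale0r.
Qed.

Lemma size_relsMM : size (relsMM q phi) = (n + n)%N.
Proof. by rewrite /relsMM /relsA size_cat !size_map -?enumT size_enum_ord. Qed.

Lemma relsMM_l (j : 'I_n) : (relsMM q phi)`_j = gp q psi2 (lshift n j).
Proof.
rewrite /relsMM /relsA -?enumT nth_cat size_map size_enum_ord ltn_ord (nth_map j) ?size_enum_ord //.
have -> : nth j (enum 'I_n) j = j by apply: ord_inj; rewrite nth_enum_ord.
by rewrite /gp Lp_psi2_l.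
Qed.

Lemma relsMM_r (j : 'I_n) : (relsMM q phi)`_(n + j) = gp q psi2 (rshift n j).
Proof.
rewrite /relsMM /relsA -?enumT nth_cat size_map size_enum_ord ltnNge leq_addr /= addKn.
rewrite (nth_map j) ?size_enum_ord //.
have -> : nth j (enum 'I_n) j = j by apply: ord_inj; rewrite nth_enum_ord.
by rewrite /gp Lp_psi2_r.
Qed.

Lemma relsMM_gp i : (i < size (relsMM q phi))%N ->
  exists j, (relsMM q phi)`_i = gp q psi2 j.
Proof.
rewrite size_relsMM => hi.
case: (ltnP i n) => hin.
  by exists (lshift n (Ordinal hin)); rewrite -relsMM_l.
have hin' : (i - n < n)%N by lia.
exists (rshift n (Ordinal hin')); rewrite -relsMM_r /=.
by rewrite subnKC.
Qed.

Lemma gpMM_l j : in_ideal (relsMM q phi) (gp q psi2 (lshift n j)).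
Proof. by rewrite -relsMM_l; apply: id_gen; rewrite size_relsMM; apply: ltn_addr. Qed.

Lemma gpMM_r j : in_ideal (relsMM q phi) (gp q psi2 (rshift n j)).
Proof. by rewrite -relsMM_r; apply: id_gen; rewrite size_relsMM ltn_add2l. Qed.

Lemma qnat m : [pchar {mpoly K[m]}].-nat q.
Proof.
have pF : p \in [pchar F] by rewrite -(fmorph_pchar f).
have [e ->] : exists e, #|F| = (p ^ e)%N.
  by exists (logn p #|F|); exact: (card_pprimeChar pF).
rewrite (eq_pnat _ (pchar_lalg _)) (eq_pnat _ (pcharf_eq pK)).
by rewrite pnatX pnat_id ?(pcharf_prime pK).
Qed.

Lemma frobD m (x y : {mpoly K[m]}) : (x + y) ^+ q = x ^+ q + y ^+ q.
Proof. exact: exprDn_pchar (qnat m). Qed.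

Definition tX : n.-tuple PXY := [tuple 'X_(lshift n i) | i < n].
Definition tY : n.-tuple PXY := [tuple 'X_(rshift n i) | i < n].
Definition tXY : n.-tuple PXY := [tuple 'X_(lshift n i) + 'X_(rshift n i) | i < n].

Lemma gp_comp m (t : n.-tuple {mpoly K[m]}) j :
  gp q phi j \mPo t = tnth t j ^+ q - \sum_(i < n) phi i j *: tnth t i.
Proof.
rewrite /gp comp_mpolyB compXn comp_mpolyXU -tnth_nth /Lp comp_sum.
congr (_ - _); apply: eq_bigr => i _.
by rewrite comp_mpolyZ comp_mpolyXU -tnth_nth.
Qed.

Lemma gp_tX j : gp q phi j \mPo tX = gp q psi2 (lshift n j).
Proof.
rewrite gp_comp tnth_mktuple /gp Lp_psi2_l; congr (_ - _).
by apply: eq_bigr => i _; rewrite tnth_mktuple.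
Qed.

Lemma gp_tY j : gp q phi j \mPo tY = gp q psi2 (rshift n j).
Proof.
rewrite gp_comp tnth_mktuple /gp Lp_psi2_r; congr (_ - _).
by apply: eq_bigr => i _; rewrite tnth_mktuple.
Qed.

Lemma gp_tXY j : gp q phi j \mPo tXY = gp q psi2 (lshift n j) + gp q psi2 (rshift n j).
Proof.
rewrite gp_comp tnth_mktuple /gp Lp_psi2_l Lp_psi2_r frobD.
under eq_bigr => i _ do rewrite tnth_mktuple scalerDr.
by rewrite big_split /= opprD addrACA.
Qed.

Lemma id_tuple (t : n.-tuple PXY) P : in_ideal (relsM q phi) P ->
  (forall j, in_ideal (relsMM q phi) (gp q phi j \mPo t)) ->
  in_ideal (relsMM q phi) (P \mPo t).
Proof.
move=> hP h; apply: id_comp hP _ => i hi.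
by have [j ->] := relsM_gp hi; apply: h.
Qed.

Lemma deltapE (P : PX) : deltap P = (P \mPo tXY) - (P \mPo tX) - (P \mPo tY).
Proof. by []. Qed.

Lemma deltap_ideal P : in_ideal (relsM q phi) P -> in_ideal (relsMM q phi) (deltap P).
Proof.
move=> hP; rewrite deltapE; apply: idB; first apply: idB.
- by apply: (id_tuple hP) => j; rewrite gp_tXY; apply: idD; [apply: gpMM_l|apply: gpMM_r].
- by apply: (id_tuple hP) => j; rewrite gp_tX; apply: gpMM_l.
- by apply: (id_tuple hP) => j; rewrite gp_tY; apply: gpMM_r.
Qed.

Lemma deltapB (P Q : PX) : deltap (P - Q) = deltap P - deltap Q.
Proof. rewrite !deltapE !comp_mpolyB. ring. Qed.

Lemma deltap_lin (c : 'I_n -> K) : deltap (\sum_(i < n) c i *: 'X_i) = 0.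
Proof.
rewrite deltapE !comp_sum -!sumrB big1 // => i _.
rewrite !comp_mpolyZ !comp_mpolyXU -!tnth_nth !tnth_mktuple scalerDr.
ring.
Qed.

Definition tS (c : K) : n.-tuple PX := [tuple c *: 'X_i | i < n].

Lemma gp_tS c j : c ^+ q = c -> gp q phi j \mPo tS c = c *: gp q phi j.
Proof.
move=> hc; rewrite gp_comp tnth_mktuple exprZn hc /gp /Lp scalerBr scaler_sumr.
congr (_ - _); apply: eq_bigr => i _.
by rewrite tnth_mktuple !scalerA mulrC.
Qed.

Lemma actF_ideal c P : c ^+ q = c -> in_ideal (relsM q phi) P ->
  in_ideal (relsM q phi) (actF c P).
Proof.
move=> hc hP; apply: id_comp hP _ => i hi.
have [j ->] := relsM_gp hi.
by rewrite gp_tS //; apply: idZ; apply: gpM_ideal.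
Qed.

Lemma actF_X c m : ('X_[m] : PX) \mPo tS c = c ^+ mdeg m *: 'X_[m].
Proof.
rewrite comp_mpolyX.
under eq_bigr => i _ do rewrite tnth_mktuple exprZn.
by rewrite scaler_prod prodrXr -mdegE -mpolyXE_id.
Qed.

Lemma actF_sum c (b : PX) :
  actF c b = \sum_(m <- msupp b) (b@_m * c ^+ mdeg m) *: 'X_[m].
Proof.
rewrite /actF -/(tS c) comp_mpolyEX; apply: eq_bigr => m _.
by rewrite actF_X scalerA.
Qed.

End Main.


Section Red2.
Variables (K : fieldType) (n q : nat).
Local Notation PX := {mpoly K[n]}.
Local Notation PXY := {mpoly K[n + n]}.

Definition Bt (i : 'I_n) : 'X_{1..n + n} := (U_(lshift n i) + U_(rshift n i))%MM.

Lemma bnd_reduced k (B : 'X_{1..k}) (P : {mpoly K[k]}) :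
  bnd B P -> (forall l, (B l < q)%N) -> reduced q P.
Proof.
move=> /allP h hB; apply/allP => u /h /mnm_lepP hu.
by apply/forallP => l; apply: leq_ltn_trans (hu l) (hB l).
Qed.

Lemma Bsum_comp (m : 'X_{1..n}) (l : 'I_(n + n)) :
  exists i0, ((\big[+%MM/0%MM]_(i < n) (Bt i *+ m i)%MM) l = m i0)%N.
Proof.
rewrite mnm_sumE.
case: (split_ordP l) => i0 -> ; exists i0.
  rewrite (bigD1 i0) //= big1 ?addn0 => [|i hi].
    by rewrite mulmnE mnmDE !mnm1E eqxx eq_rlshift addn0 mul1n.
  by rewrite mulmnE mnmDE !mnm1E eq_lshift eq_rlshift (negbTE hi).
rewrite (bigD1 i0) //= big1 ?addn0 => [|i hi].
  by rewrite mulmnE mnmDE !mnm1E eqxx eq_lrshift add0n mul1n.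
by rewrite mulmnE mnmDE !mnm1E eq_rshift eq_lrshift (negbTE hi).
Qed.

Lemma comp_reduced (t : n.-tuple PXY) (b : PX) : reduced q b ->
  (forall i, bnd (Bt i) (tnth t i)) -> reduced q (b \mPo t).
Proof.
move=> /allP hb ht; rewrite comp_mpolyE big_seq; apply: reduced_sum => m hm.
apply: reducedZ.
apply: (@bnd_reduced _ (\big[+%MM/0%MM]_(i < n) (Bt i *+ m i)%MM)).
  by apply: bnd_prod => i; apply: bndXn.
move=> l; have [i0 ->] := Bsum_comp m l.
by move/forallP: (hb m hm) => /(_ i0).
Qed.

Lemma reducedB k (P Q : {mpoly K[k]}) : reduced q P -> reduced q Q -> reduced q (P - Q).
Proof. by move=> h1 h2; apply: reducedD => //; rewrite -scaleN1r; apply: reducedZ. Qed.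

End Red2.

Section Final.
Variables (K : fieldType) (v : K -> int).
Hypothesis dv : discrete_valuation v.
Definition OBsub : subring_closed (OB v) := OB_subring dv.
HB.instance Definition _ := GRing.isSubringClosed.Build K (OB v) OBsub.

Variables (p : nat) (F : finFieldType) (f : {rmorphism F -> K})
  (n : nat) (phi : 'M[K]_n) (a : {mpoly K[n]}).
Hypothesis pK : p \in [pchar K].
Hypothesis phiO : forall i j, inO v (phi i j).
Local Notation q := #|F|.
Local Notation PX := {mpoly K[n]}.
Local Notation PXY := {mpoly K[n + n]}.
Let q_gt1 : (1 < q)%N := finNzRing_gt1 F.

Lemma deltap_reduced (b : PX) : reduced q b -> reduced q (deltap b).
Proof.
move=> hb; rewrite deltapE; apply: reducedB; first apply: reducedB.
- apply: comp_reduced => // i; rewrite tnth_mktuple; apply: bndD.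
    exact: (bndW (lem_addr _ _) (bndX K _)).
  exact: (bndW (lem_addl _ _) (bndX K _)).
- apply: comp_reduced => // i; rewrite tnth_mktuple.
  exact: (bndW (lem_addr _ _) (bndX K _)).
- apply: comp_reduced => // i; rewrite tnth_mktuple.
  exact: (bndW (lem_addl _ _) (bndX K _)).
Qed.

Lemma psi2O i j : psi2 phi i j \in OB v.
Proof.
rewrite /psi2.
case: (split_ordP i) => i0 ->; case: (split_ordP j) => j0 ->.
- by rewrite block_mxEul; apply/OBP.
- by rewrite block_mxEur mxE rpred0.
- by rewrite block_mxEdl mxE rpred0.
- by rewrite block_mxEdr; apply/OBP.
Qed.


Definition thf (j : 'I_n) (l : 'I_(n + n)) : PX :=
  match split l with
  | inl a => if a == j then 'X_a else 0
  | inr a => if a == j then 0 else 'X_a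
  end.
Definition th j : (n + n).-tuple PX := [tuple thf j l | l < n + n].

Lemma split_l (i : 'I_n) : split (lshift n i) = inl i.
Proof. exact: (unsplitK (inl _ i)). Qed.
Lemma split_r (i : 'I_n) : split (rshift n i) = inr i.
Proof. exact: (unsplitK (inr _ i)). Qed.

Lemma deltap_th (b : PX) j :
  deltap b \mPo th j = b - (b \mPo selT K (pred1 j)) - (b \mPo selT K (predC1 j)).
Proof.
rewrite deltapE !comp_mpolyB !compmA.
have E1 : [tuple tnth (tXY K n) i \mPo th j | i < n] = [tuple 'X_i | i < n].
  apply: eq_from_tnth => i; rewrite !tnth_mktuple comp_mpolyD !compXU /thf split_l split_r.
  by case: eqP => _; rewrite ?addr0 ?add0r.
have E2 : [tuple tnth (tX K n) i \mPo th j | i < n] = selT K (pred1 j).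
  by apply: eq_from_tnth => i; rewrite !tnth_mktuple compXU /thf split_l.
have E3 : [tuple tnth (tY K n) i \mPo th j | i < n] = selT K (predC1 j).
  apply: eq_from_tnth => i; rewrite !tnth_mktuple compXU /thf split_r /=.
  by case: eqP.
by rewrite E1 E2 E3 comp_mpoly_id.
Qed.

Lemma coef_deltap_th (b : PX) (e : 'X_{1..n}) (j i : 'I_n) : i != j -> e j != 0%N -> e i != 0%N ->
  (deltap b \mPo th j)@_e = b@_e.
Proof.
move=> hij hj hi; rewrite deltap_th !mcoeffB !coef_sel.
have -> : allin (pred1 j) e = false.
  by apply/negbTE/forallPn; exists i; rewrite /= hij.
have -> : allin (predC1 j) e = false.
  by apply/negbTE/forallPn; exists j; rewrite /= eqxx.
by rewrite !subr0.
Qed.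

Lemma th_over (P : PXY) j : P \in mpolyOver (n + n) (OB v) ->
  P \mPo th j \in mpolyOver n (OB v).
Proof.
move=> hP; apply: comp_over => // l; rewrite tnth_mktuple /thf.
by case: (split l) => x; case: eqP => _; rewrite ?rpred0 ?mpolyOverX.
Qed.

Lemma main_lemma :
  (exists R : PXY, Opoly v R /\ congI (relsMM q phi) (deltap a) R) ->
  (forall alpha : F, congI (relsM q phi) (actF (f alpha) a) (f alpha *: a)) ->
  exists a' : PX,
    [/\ Opoly v a',
        congI (relsMM q phi) (deltap a) (deltap a')
      & exists c : 'I_n -> K,
          congI (relsM q phi) (a - a') (\sum_(i < n) c i *: 'X_i)].
Proof.
move=> [R [hRO hR]] hF.
set b := rhoN q phi (msize a) a.
have hbred : reduced q b := rhoN_reduced phi q_gt1 (leqnn _).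
have hab : congI (relsM q phi) a b := rhoN_cong (gpM_ideal F phi) _ _.
have hdab : in_ideal (relsMM q phi) (deltap a - deltap b).
  by rewrite -deltapB; apply: (deltap_ideal f pK).
have wt : forall e, mdeg e != 1%N -> (mdeg e < q)%N -> b@_e = 0.
  move=> e he1 heq; have [al hal] := exists_alpha he1 heq.
  set c := f al.
  have hc : c ^+ q = c by rewrite /c -rmorphXn expf_card.
  have hI : in_ideal (relsM q phi) (actF c b - c *: b).
    have h1 := hF al.
    have h2 : in_ideal (relsM q phi) (actF c (a - b)) := actF_ideal hc hab.
    have h3 : in_ideal (relsM q phi) (c *: (a - b)) := idZ c hab.
    have -> : actF c b - c *: b = (actF c a - c *: a) - actF c (a - b) + c *: (a - b).
      rewrite /actF comp_mpolyB scalerBr; ring.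
    by apply: idD => //; apply: idB.
  have hred : reduced q (actF c b - c *: b).
    apply: reducedB; last exact: reducedZ.
    rewrite actF_sum big_seq; apply: reduced_sum => m hm; apply: reducedZ.
    by apply: reducedX; apply: (allP hbred).
  have h0 := reduced_ideal0 (psi := phi) q_gt1 hred hI (@relsM_gp _ _ _ _).
  have := congr1 (mcoeff e) h0.
  rewrite mcoeffB mcoeffZ actF_sum coef_sumX ?msupp_uniq // mcoeff0.
  case: ifP => he; last by move=> _; apply: memN_msupp_eq0; rewrite he.
  move/eqP; rewrite [c * _]mulrC -mulrBr mulf_eq0 subr_eq0 => /orP[/eqP //|].
  by rewrite /c -rmorphXn (inj_eq (fmorph_inj f)) (negbTE hal).
have hD : deltap b \in mpolyOver (n + n) (OB v).
  have hDR : in_ideal (relsMM q phi) (deltap b - R).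
    have -> : deltap b - R = (deltap a - R) - (deltap a - deltap b) by ring.
    by apply: idB.
  have [d hd] := kill_ideal (psi := psi2 phi) q_gt1 hDR (@relsMM_gp _ _ _ _ _ pK).
  have -> : deltap b = rhoN q (psi2 phi) d R.
    move: hd; rewrite rhoNB (rhoN_red _ _ (deltap_reduced hbred)) => /eqP.
    by rewrite subr_eq0 => /eqP.
  apply: rhoN_over => [i j|]; first exact: psi2O.
  by apply/mpolyOverP => m; apply/OBP; apply: hRO.
pose L := \sum_(i < n) b@_U_(i)%MM *: ('X_i : PX).
exists (b - L); split.
- move=> e; apply/OBP.
  rewrite mcoeffB /L raddf_sum /=.
  under eq_bigr => i _ do rewrite mcoeffZ mcoeffX.
  case: (boolP (mdeg e == 1%N)) => he1.
    have /mdeg1P [i0 /eqP ->] := he1.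
    rewrite (bigD1 i0) //= eqxx mulr1 big1 ?addr0 ?subrr ?rpred0 // => i hi.
    by rewrite eq_mnm1 (negbTE hi) mulr0.
  rewrite big1 ?subr0 => [|i _]; last first.
    have : U_(i)%MM != e by apply: contra he1 => /eqP <-; rewrite mdeg1.
    by move/negbTE ->; rewrite mulr0.
  case: (boolP (e \in msupp b)) => hes; last by rewrite memN_msupp_eq0 // rpred0.
  have her : redm q e := allP hbred e hes.
  case: (boolP [exists j, exists i, [&& i != j, e j != 0%N & e i != 0%N]]).
    case/existsP => j /existsP [i /and3P [hij hj hi]].
    rewrite -(coef_deltap_th b hij hj hi).
    by apply/mpolyOverP; apply: th_over.
  move=> hne; rewrite wt ?rpred0 //.
  case: (boolP [exists j, e j != 0%N]).
    case/existsP => j hj.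
    have -> : mdeg e = e j.
      rewrite mdegE (bigD1 j) //= big1 ?addn0 // => i hij.
      apply/eqP; apply: contraNT hne => hi.
      by apply/existsP; exists j; apply/existsP; exists i; rewrite hij hj hi.
    exact: (forallP her j).
  move/existsPn => h0.
  have -> : mdeg e = 0%N.
    by rewrite mdegE big1 // => i _; apply/eqP; have := h0 i; rewrite negbK.
  exact: ltnW.
- by rewrite /congI deltapB deltap_lin subr0.
- exists (fun i => b@_U_(i)%MM); rewrite /congI.
  have -> : a - (b - L) - L = a - b by ring.
  exact: hab.
Qed.

End Final.

Unset Implicit Arguments.

Theorem lemma1 (K : fieldType) (v : K -> int) (p : nat)
    (F : finFieldType) (f : {rmorphism F -> K})
    (n : nat) (phi : 'M[K]_n) (a : {mpoly K[n]}) :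
  discrete_valuation v -> vcomplete v ->
  p \in [pchar K] -> perfect_residue v p ->
  (forall i j, inO v (phi i j)) -> \det phi != 0 ->
  (* delta^+ a lies in A[M] (x)_O A[M] *)
  (exists R : {mpoly K[n + n]},
      Opoly v R /\ congI (relsMM #|F| phi) (deltap a) R) ->
  (* [alpha] a = alpha a for all alpha in F_q *)
  (forall alpha : F, congI (relsM #|F| phi) (actF (f alpha) a) (f alpha *: a)) ->
  exists a' : {mpoly K[n]},
    [/\ Opoly v a',
        congI (relsMM #|F| phi) (deltap a) (deltap a')
      & exists c : 'I_n -> K,
          congI (relsM #|F| phi) (a - a') (\sum_(i < n) c i *: 'X_i)].
Proof.
move=> dv _ pK _ phiO _ hR hF.
exact: (main_lemma dv pK phiO hR hF).
Qed.
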